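(* Fix an integer $b\ge2$, $\gamma\in(0,1)$, let $\phi$ be a real analytic $\mathbb{Z}$-periodic function satisfying condition (H), and assume $\alpha<\min\{1,\frac{\log b}{\log(1/\gamma)}\}$. Then there exist $x_2\in[0,1]$ and $\mathbf{u}\in\Sigma$ with $S'(x_2,\mathbf{u})\neq0$.
   Context: $\Lambda=\{0,\dots,b-1\}$, $\Sigma=\Lambda^{\mathbb{Z}_+}$, $\nu$ uniform on $\Lambda$. $S(x,\mathbf{j})=\sum_{n\ge1}\gamma^{n-1}\phi\big(\frac{x+j_1+j_2b+\cdots+j_nb^{n-1}}{b^n}\big)$ and $S'$ denotes the derivative in $x$. Condition (H): for all $\mathbf{i}\neq\mathbf{j}\in\Sigma$, $x\mapsto S(x,\mathbf{j})-S(x,\mathbf{i})$ is not identically zero. $\alpha$ is the constant such that for Lebesgue-a.e. $x$, the image $m_x$ of $\nu^{\mathbb{Z}_+}$ under $\mathbf{j}\mapsto S(x,\mathbf{j})$ is exact dimensional with dimension $\alpha$. *)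

(* Defs.v *)
From HB Require Import structures.
From mathcomp Require Import all_boot all_order all_algebra.
From mathcomp Require Import all_classical all_reals all_analysis.
Unset Printing Implicit Defensive.
Import Order.TTheory GRing.Theory Num.Theory.
Import numFieldNormedType.Exports.
Local Open Scope classical_set_scope.
Local Open Scope ring_scope.

Section Defs.
Context {R : realType}.

(* Sigma = Lambda^{Z_+}, Lambda = {0,...,b-1}; we index coordinates from 0:
   j k is the paper's j_{k+1}. *)
Definition Sigma (b : nat) := nat -> 'I_b.

Definition real_analytic (f : R -> R) : Prop :=
  forall x0 : R, exists2 r : R, 0 < r &
    exists a : nat -> R, forall x : R, `|x - x0| < r ->
      (fun n => \sum_(k < n) a k * (x - x0) ^+ k) @ \oo --> f x.

Definition Zperiodic (f : R -> R) : Prop := forall x : R, f (x + 1) = f x.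

Definition S (b : nat) (gamma : R) (phi : R -> R) (x : R) (j : Sigma b) : R :=
  limn (fun N : nat => \sum_(n < N)
     (gamma ^+ n * phi ((x + \sum_(k < n.+1) ((j k : nat)%:R * (b%:R) ^+ k))
                          / (b%:R) ^+ n.+1))).

Definition condH (b : nat) (gamma : R) (phi : R -> R) : Prop :=
  forall i j : Sigma b, i <> j ->
    ~ (forall x : R, S b gamma phi x j - S b gamma phi x i = 0).

Definition cyl (b : nat) (w : seq 'I_b) : set (Sigma b) :=
  [set j | map j (iota 0 (size w)) = w].

(* null sets for the uniform Bernoulli measure nu^{Z_+} (outer measure 0,
   computed with countable covers by cylinders, [w] having mass b^-|w|) *)
Definition bern_null (b : nat) (N : set (Sigma b)) : Prop :=
  forall eps : R, 0 < eps -> exists ws : nat -> seq 'I_b,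
    N `<=` \bigcup_k cyl b (ws k) /\
    forall n, \sum_(k < n) ((b%:R : R) ^- size (ws k)) <= eps.

(* nu^{Z_+}(U) for an open set U of Sigma: the supremum of the masses of the
   unions of level-n cylinders contained in U (inner regularity by cylinders). *)
Definition bern_open (b : nat) (U : set (Sigma b)) : R :=
  sup (range (fun n : nat =>
    (#|[set w : n.-tuple 'I_b | `[< cyl b (tval w) `<=` U >]]|%:R : R)
      / (b%:R) ^+ n)).

(* m_x(B(y,r)) where m_x is the image of nu^{Z_+} under j |-> S(x,j);
   the preimage of the open ball is open in Sigma *)
Definition mball (b : nat) (gamma : R) (phi : R -> R) (x y r : R) : R :=
  bern_open b [set j : Sigma b | `|S b gamma phi x j - y| < r].

(* m_x is exact dimensional with dimension alpha: for m_x-a.e. y,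
   log m_x(B(y,r)) / log r -> alpha as r -> 0+.  "m_x-a.e. y" means
   nu^{Z_+}-a.e. j for y = S(x,j). *)
Definition exact_dim (b : nat) (gamma : R) (phi : R -> R) (x alpha : R) : Prop :=
  bern_null b [set j : Sigma b |
    ~ ((fun r => ln (mball b gamma phi x (S b gamma phi x j) r) / ln r)
         @ 0^'+ --> alpha)].

End Defs.

(* Main.v *)
Require Import Defs.
From mathcomp Require Import all_boot lra zify.
From HB Require Import structures.
From mathcomp Require Import all_boot all_order all_algebra.
From mathcomp Require Import all_classical all_reals all_analysis.
Import Order.TTheory GRing.Theory Num.Theory.
Import numFieldNormedType.Exports.
Local Open Scope classical_set_scope.
Local Open Scope ring_scope.

Section A.
Context {R : realType}.

Lemma bern (d : R) n : 0 <= d -> 1 + n%:R * d <= (1 + d) ^+ n.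
Proof.
move=> d0; elim: n => [|n IH]; first by rewrite mul0r addr0 expr0.
rewrite exprS -nat1r mulrDl mul1r.
have h1 : 0 <= (1 + d) ^+ n by rewrite exprn_ge0 // addr_ge0.
have h2 : 1 <= (1 + d) ^+ n by rewrite exprn_ege1 // lerDl.
nra.
Qed.

Lemma nq_bound (d : R) n : 0 < d -> n%:R / (1 + d) ^+ n <= d^-1.
Proof.
move=> d0; have p : 0 < (1 + d) ^+ n by rewrite exprn_gt0 // addr_gt0.
rewrite ler_pdivrMr // ler_pdivlMl //.
apply: le_trans (_ : 1 + n%:R * d <= _); last exact: bern (ltW d0).
rewrite mulrC; lra.
Qed.

Lemma diffs_cvg (c : R^nat) (r : R) :
  (forall z, `|z| < r -> cvgn (pseries c z)) ->
  forall z, `|z| < r -> cvgn (pseries (pseries_diffs c) z).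
Proof.
move=> Hc z zr.
have z0 : 0 <= `|z| by [].
set s1 := (`|z| + r) / 2.
set s2 := (s1 + r) / 2.
have s1p : 0 < s1 by rewrite /s1; lra.
have zs1 : `|z| < s1 by rewrite /s1; lra.
have s1r : s1 < r by rewrite /s1; lra.
have s12 : s1 < s2 by rewrite /s2; lra.
have s2r : s2 < r by rewrite /s2; lra.
have s2p : 0 < s2 := lt_trans s1p s12.
set d := s2 / s1 - 1.
have d0 : 0 < d by rewrite /d subr_gt0 ltr_pdivlMr // mul1r.
have s2E : s2 = s1 * (1 + d) by rewrite /d addrC subrK mulrC divfK // gt_eqF.
clearbody d s2 s1.
have [K [_ KH]] := cvg_series_bounded (Hc s2 ltac:(by rewrite ger0_norm ?(ltW s2p))).
have HB n : `|c n * s2 ^+ n| <= K + 1 by apply: KH => //; lra.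
apply: normed_cvg.
apply: (series_le_cvg (v_ := geometric ((K + 1) / (d * s1)) (`|z| / s1))).
- by move=> n /=.
- move=> n; rewrite /geometric /=.
  have K1 : 0 <= K + 1 by apply: le_trans (HB 0%N).
  apply: mulr_ge0; first by apply: divr_ge0 => //; apply: mulr_ge0; apply: ltW.
  by apply: exprn_ge0; apply: divr_ge0 => //; apply: ltW.
- move=> n /=; rewrite /geometric /pseries_diffs.
  have Hn := HB n.+1.
  rewrite !normrM normr_nat normrX.
  rewrite normrM normrX (ger0_norm (ltW s2p)) s2E exprMn in Hn.
  have q1 : n.+1%:R * d <= (1 + d) ^+ n.+1.
    by have := bern d n.+1 (ltW d0); lra.
  have P0 : 0 < s1 ^+ n.+1 by rewrite exprn_gt0.
  apply: (@le_trans _ _ (((K + 1) / (d * s1 ^+ n.+1)) * `|z| ^+ n)); last first.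
    rewrite le_eqVlt; apply/orP; left; apply/eqP.
    by rewrite expr_div_n exprS (mulrA d) invfM [in RHS]mulrA mulrAC mulrA (mulrAC (K + 1)).
  set A := `|c n.+1|; set w := `|z| ^+ n.
  have w0 : 0 <= w by rewrite exprn_ge0.
  have A0 : 0 <= A by rewrite /A.
  apply: ler_wpM2r => //.
  rewrite ler_pdivlMr ?mulr_gt0 //.
  move: Hn q1; set P := s1 ^+ n.+1; set q := (1 + d) ^+ n.+1; set N := n.+1%:R => Hn q1.
  have AP : 0 <= A * P by rewrite mulr_ge0 // ltW.
  rewrite -/A in Hn; clearbody A P q N.
  nra.
- apply: is_cvg_geometric_series.
  rewrite ger0_norm; last by rewrite divr_ge0 // ltW.
  by rewrite ltr_pdivrMr // mul1r.
Qed.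

Definition Pk (a : R^nat) k (y : R) := limn (pseries (iter k (@pseries_diffs R) a) y).

Lemma iter_cvg (a : R^nat) r : (forall z, `|z| < r -> cvgn (pseries a z)) ->
  forall k z, `|z| < r -> cvgn (pseries (iter k (@pseries_diffs R) a) z).
Proof.
move=> H; elim=> [//|k IH] z zr /=.
exact: diffs_cvg IH z zr.
Qed.
Arguments iter_cvg {a r}.

Lemma Pk_derive (a : R^nat) r : (forall z, `|z| < r -> cvgn (pseries a z)) ->
  forall (k : nat) (z : R), `|z| < r -> is_derive z 1 (Pk a k) (Pk a k.+1 z).
Proof.
move=> H k z zr.
have z0 : 0 <= `|z| by [].
set K := (`|z| + r) / 2.
have K0 : 0 <= K by rewrite /K; lra.
have Kr : `|K| < r by rewrite (ger0_norm K0) /K; lra.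
have zK : `|z| < `|K| by rewrite (ger0_norm K0) /K; lra.
have := pseries_snd_diffs (iter_cvg H k K Kr) (iter_cvg H k.+1 K Kr) (iter_cvg H k.+2 K Kr) zK. rewrite /Pk. by apply.
Qed.
Arguments Pk_derive {a r}.

Lemma loc_derive (f : R -> R) (a : R^nat) r y k :
  (forall z, `|z| < r -> cvgn (pseries a z)) ->
  (forall t, `|t - y| < r -> f t = Pk a k (t - y)) ->
  forall t, `|t - y| < r -> is_derive t 1 f (Pk a k.+1 (t - y)).
Proof.
move=> H Hf t ty.
have e0 : 0 < r - `|t - y| by lra.
apply: (@near_eq_is_derive _ _ _ (fun s => Pk a k (s - y))).
  near=> s; rewrite Hf //.
  have : ball t (r - `|t - y|) s.
    near: s; exact: nbhsx_ballx.
  rewrite -ball_normE /= => hs.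
  have := ler_normD (s - t) (t - y); rewrite addrA subrK (distrC s t) => h.
  lra.
have := @is_derive1_comp R (Pk a k) (shift (- y)) t (Pk a k.+1 (t - y)) 1.
rewrite mulr1; apply; last exact: is_derive_shift.
exact: Pk_derive H k (t - y) ty.
Unshelve. all: by end_near.
Qed.
Arguments loc_derive {f a r y k}.

Lemma psE (a : R^nat) z :
  (fun n => \sum_(k < n) a k * z ^+ k) = pseries a z.
Proof. by apply/funext => n; rewrite /pseries /series /= big_mkord. Qed.

Lemma phi_loc (phi : R -> R) : real_analytic phi -> forall y : R,
  derivable phi y 1 /\ derivable ('D_1 phi) y 1 /\
  {for y, continuous ('D_1 ('D_1 phi))}.
Proof.
move=> Han y.
have [r r0 [a Ha]] := Han y.
have H : forall z, `|z| < r -> cvgn (pseries a z).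
  move=> z zr; have := Ha (z + y); rewrite addrK => /(_ zr).
  by rewrite psE => h; apply/cvg_ex; exists (phi (z + y)).
have E0 : forall t, `|t - y| < r -> phi t = Pk a 0 (t - y).
  move=> t ty; have := Ha t ty; rewrite psE => h.
  by rewrite /Pk /= (cvg_lim _ h).
have D1 := loc_derive H E0.
have E1 : forall t, `|t - y| < r -> 'D_1 phi t = Pk a 1 (t - y).
  by move=> t ty; case: (D1 t ty).
have D2 := loc_derive H E1.
have E2 : forall t, `|t - y| < r -> 'D_1 ('D_1 phi) t = Pk a 2 (t - y).
  by move=> t ty; case: (D2 t ty).
have D3 := loc_derive H E2.
have yy : `|y - y| < r by rewrite subrr normr0.
split; first by case: (D1 y yy).
split; first by case: (D2 y yy).
apply: differentiable_continuous; apply/derivable1_diffP.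
by case: (D3 y yy).
Qed.
End A.
Section B.
Context {R : realType}.

Lemma bnd (f : R -> R) (a b : R) : a <= b -> (forall y, {for y, continuous f}) ->
  exists M, forall y, a <= y <= b -> `|f y| <= M.
Proof.
move=> ab hf.
have hg : continuous (fun y => `|f y|).
  move=> y; apply: continuous_comp; first exact: hf.
  exact: norm_continuous.
have [c _ Hc] := EVT_max ab (continuous_subspaceT hg).
exists `|f c| => y yab; apply: Hc; by rewrite in_itv /=.
Qed.

Lemma mvt_gen (f : R -> R) : (forall x, derivable f x 1) -> forall p q : R,
  exists xi, ((p <= xi <= q) \/ (q <= xi <= p)) /\ f q - f p = 'D_1 f xi * (q - p).
Proof.
move=> hd p q.
have hc : forall a b : R, {within `[a, b], continuous f}.
  by move=> a b; apply: derivable_within_continuous => x _; exact: hd.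
case: (ltgtP p q) => [pq|qp|->].
- have [c] := MVT pq (fun x _ => derivableP (hd x)) (hc p q).
  rewrite in_itv /= => /andP [h1 h2] E; exists c; split => //.
  by left; rewrite !ltW.
- have [c] := MVT qp (fun x _ => derivableP (hd x)) (hc q p).
  rewrite in_itv /= => /andP [h1 h2] E; exists c; split.
    by right; rewrite !ltW.
  by rewrite -opprB E -mulrN opprB.
- by exists q; split; [left; rewrite lexx | rewrite !subrr mulr0].
Qed.
End B.
Lemma between_norm {R : realType} {p q xi : R} :
  (p <= xi <= q) \/ (q <= xi <= p) -> `|xi - p| <= `|q - p|.
Proof.
case=> /andP [h1 h2].
  by rewrite !ger0_norm ?subr_ge0 ?(le_trans h1 h2) //; lra.
by rewrite !ler0_norm ?subr_le0 ?(le_trans h1 h2) //; lra.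
Qed.

Lemma between_in {R : realType} {p q xi a b : R} :
  (p <= xi <= q) \/ (q <= xi <= p) -> a <= p <= b -> a <= q <= b -> a <= xi <= b.
Proof. by case=> /andP [h1 h2] /andP [h3 h4] /andP [h5 h6]; apply/andP; split; lra. Qed.

Section C.
Context {R : realType}.
Variable phi : R -> R.
Hypothesis Han : real_analytic phi.

Lemma d_phi y : derivable phi y 1.
Proof. by case: (@phi_loc R phi Han y). Qed.
Lemma d_phi1 y : derivable ('D_1 phi) y 1.
Proof. by case: (@phi_loc R phi Han y) => _ []. Qed.
Lemma c_phi2 y : {for y, continuous ('D_1 ('D_1 phi))}.
Proof. by case: (@phi_loc R phi Han y) => _ []. Qed.
Lemma c_phi y : {for y, continuous phi}.
Proof. by apply: differentiable_continuous; apply/derivable1_diffP; exact: d_phi. Qed.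
Lemma c_phi1 y : {for y, continuous ('D_1 phi)}.
Proof. by apply: differentiable_continuous; apply/derivable1_diffP; exact: d_phi1. Qed.

Lemma tay_bound : exists M2, 0 <= M2 /\ forall y z : R, -1 <= y <= 2 -> -1 <= z <= 2 ->
  `|phi z - phi y - (z - y) * 'D_1 phi y| <= M2 * (z - y) ^+ 2.
Proof.
have m12 : (-1 : R) <= 2 by lra.
have [M2 HM] := bnd _ _ _ m12 c_phi2.
have M0 : 0 <= M2.
  by apply: le_trans (HM 0 _); rewrite //; apply/andP; split; lra.
exists M2; split => // y z hy hz.
have [xi [hb E]] := mvt_gen _ d_phi y z.
rewrite E (mulrC (z - y)) -mulrBl normrM.
have [xi2 [hb2 E2]] := mvt_gen _ d_phi1 y xi.
rewrite E2 normrM.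
have hxi := between_in hb hy hz.
have hxi2 := between_in hb2 hy hxi.
have hA := HM xi2 hxi2.
have hB := between_norm hb.
have hB2 := between_norm hb2.
rewrite -(real_normK (num_real (z - y))).
have h1 := ler_pM (normr_ge0 _) (normr_ge0 _) hA hB.
by rewrite expr2 mulrA; apply: ler_wpM2r.
Qed.
End C.
Section D.
Context {R : realType}.
Variables (b : nat) (gamma : R) (phi : R -> R).
Hypotheses (b2 : (2 <= b)%N) (g0 : 0 < gamma) (g1 : gamma < 1).

Definition cS (u : Sigma b) n : R := \sum_(k < n.+1) ((u k : nat)%:R * (b%:R)^+k).
Definition eS (u : Sigma b) n (z : R) : R := (z + cS u n) / (b%:R) ^+ n.+1.

Lemma SE (u : Sigma b) x :
  S b gamma phi x u = limn (fun N => \sum_(n < N) (gamma ^+ n * phi (eS u n x))).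
Proof. by []. Qed.

Lemma sum_lt (u : Sigma b) m : (\sum_(k < m) u k * b ^ k < b ^ m)%N.
Proof.
elim: m => [|m IH]; first by rewrite big_ord0 expn0.
rewrite big_ord_recr /= expnS.
set um := nat_of_ord (u _).
have : (um < b)%N by exact: ltn_ord.
move: IH; set s := (\sum_(_ < _) _)%N; set P := (b ^ m)%N.
by move=> *; nia.
Qed.

Lemma cS_nat (u : Sigma b) n : cS u n = ((\sum_(k < n.+1) u k * b ^ k)%N)%:R.
Proof. by rewrite natr_sum; apply: eq_bigr => k _; rewrite natrM natrX. Qed.

Lemma cS_ge0 u n : 0 <= cS u n.
Proof. by rewrite cS_nat ler0n. Qed.

Lemma cS_le u n : cS u n + 1 <= (b%:R) ^+ n.+1.
Proof.
rewrite cS_nat -natrX -[1]/(1%:R) -natrD ler_nat addn1.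
exact: sum_lt.
Qed.

Lemma Bn_ge1 n : 1 <= (b%:R : R) ^+ n.
Proof. by apply: exprn_ege1; rewrite ler1n; apply: leq_trans b2. Qed.

Lemma Bn_gt0 n : 0 < (b%:R : R) ^+ n.
Proof. exact: lt_le_trans (Bn_ge1 n). Qed.

Lemma eS_in u n z : -1 <= z <= 2 -> -1 <= eS u n z <= 2.
Proof.
move=> /andP [h1 h2]; have B1 := Bn_ge1 n.+1; have B0 := Bn_gt0 n.+1.
have c0 := cS_ge0 u n; have c1 := cS_le u n.
rewrite /eS ler_pdivlMr // ler_pdivrMr //; apply/andP; split; lra.
Qed.

Lemma eS_01 u n z : 0 <= z <= 1 -> 0 <= eS u n z <= 1.
Proof.
move=> /andP [h1 h2]; have B1 := Bn_ge1 n.+1; have B0 := Bn_gt0 n.+1.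
have c0 := cS_ge0 u n; have c1 := cS_le u n.
rewrite /eS ler_pdivlMr // ler_pdivrMr //; apply/andP; split; lra.
Qed.

Lemma eS_diff u n x h : eS u n (x + h) - eS u n x = h * ((b%:R) ^+ n.+1)^-1.
Proof. by rewrite /eS -mulrBl; congr (_ * _); lra. Qed.

Lemma geo_cvg (a : nat -> R) M : (forall n, `|a n| <= M * gamma ^+ n) ->
  cvgn (fun N => \sum_(n < N) a n).
Proof.
move=> Ha.
have M0 : 0 <= M by have := Ha 0%N; rewrite expr0 mulr1; apply: le_trans.
have -> : (fun N => \sum_(n < N) a n) = series a.
  by apply/funext => N; rewrite /series /= big_mkord.
apply: normed_cvg.
apply: (series_le_cvg (v_ := geometric M gamma)) => //=.
- by move=> n; rewrite /geometric /= mulr_ge0 // exprn_ge0 // ltW.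
- apply: is_cvg_geometric_series; rewrite ger0_norm //; exact: ltW.
Qed.

Lemma geo_bound (a : nat -> R) M N : (forall n, `|a n| <= M * gamma ^+ n) ->
  `|\sum_(n < N) a n| <= M / (1 - gamma).
Proof.
move=> Ha.
have M0 : 0 <= M by have := Ha 0%N; rewrite expr0 mulr1; apply: le_trans.
apply: le_trans (ler_norm_sum _ _ _) _.
apply: le_trans (_ : \sum_(n < N) M * gamma ^+ n <= _).
  by apply: ler_sum => n _; exact: Ha.
have := @geometric_le_lim R N M gamma M0 g0.
rewrite ger0_norm ?(ltW g0) // => /(_ g1).
by rewrite /series /= big_mkord.
Qed.

Lemma lim_bound (f : nat -> R) l K : f @ \oo --> l -> (forall N, `|f N| <= K) -> `|l| <= K.
Proof.
move=> H hK.
have H2 : `|f x| @[x --> \oo] --> `|l| by apply: cvg_norm.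
rewrite -(cvg_lim _ H2) //.
apply: limr_le; first by apply/cvg_ex; exists `|l|.
exact: nearW.
Qed.

End D.
Section E.
Context {R : realType}.
Variables (b : nat) (gamma : R) (phi : R -> R).
Hypotheses (b2 : (2 <= b)%N) (g0 : 0 < gamma) (g1 : gamma < 1) (Han : real_analytic phi).

Lemma T_cvg (u : Sigma b) z : -1 <= z <= 2 ->
  cvgn (fun N => \sum_(n < N) (gamma ^+ n * phi (eS b u n z))).
Proof.
move=> hz.
have m12 : (-1:R) <= 2 by lra.
have [M0 HM] := bnd _ _ _ m12 (c_phi _ Han).
apply: (geo_cvg _ g0 g1 (fun n => gamma ^+ n * phi (eS b u n z)) M0) => n.
rewrite normrM (ger0_norm (exprn_ge0 _ (ltW g0))) mulrC.
apply: ler_wpM2r; first exact: exprn_ge0 (ltW g0).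
exact: HM (eS_in _ _ b2 g0 g1 u n _ hz).
Qed.

Lemma S_derivable (u : Sigma b) x : 0 <= x <= 1 ->
  derivable (fun z => S b gamma phi z u) x 1.
Proof.
move=> hx.
have m12 : (-1:R) <= 2 by lra.
have [M1 HM1] := bnd _ _ _ m12 (c_phi1 _ Han).
have [M2 [M20 TAY]] := tay_bound _ Han.
have hx2 : -1 <= x <= 2 by move: hx => /andP [? ?]; apply/andP; split; lra.
set Ds := fun N => \sum_(n < N) (gamma ^+ n * (((b%:R) ^+ n.+1)^-1 * 'D_1 phi (eS b u n x))).
have cvD : cvgn Ds.
  apply: (geo_cvg _ g0 g1 (fun n => gamma ^+ n * (((b%:R) ^+ n.+1)^-1 * 'D_1 phi (eS b u n x))) M1) => n.
  rewrite normrM (ger0_norm (exprn_ge0 _ (ltW g0))) mulrC.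
  apply: ler_wpM2r; first exact: exprn_ge0 (ltW g0).
  rewrite normrM.
  have Bi : `|((b%:R : R) ^+ n.+1)^-1| <= 1.
    rewrite ger0_norm ?invr_ge0 ?(ltW (Bn_gt0 _ b2 _)) //.
    by rewrite invf_le1 ?(Bn_gt0 _ b2) ?(Bn_ge1 _ b2).
  have := HM1 _ (eS_in _ _ b2 g0 g1 u n _ hx2).
  have := normr_ge0 ('D_1 phi (eS b u n x)).
  have := normr_ge0 (((b%:R : R) ^+ n.+1)^-1).
  move: Bi; set p := `|_^-1|; set q := `|'D_1 phi _|.
  by move=> *; nra.
set D := limn Ds.
set K := M2 / (1 - gamma).
have K0 : 0 <= K by rewrite /K divr_ge0 // subr_ge0 ltW.
have key : forall h, `|h| <= 1 ->
    `|S b gamma phi (x + h) u - S b gamma phi x u - h * D| <= K * h ^+ 2.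
  move=> h h1.
  have hxh : -1 <= x + h <= 2.
    move: hx h1 => /andP [? ?]; rewrite ler_norml => /andP [? ?].
    by apply/andP; split; lra.
  set a := fun n => eS b u n (x + h); set c := fun n => eS b u n x.
  have cF : (fun N => \sum_(n < N) (gamma ^+ n * phi (a n)) - \sum_(n < N) (gamma ^+ n * phi (c n)) - h * Ds N) @ \oo -->
      (S b gamma phi (x + h) u - S b gamma phi x u - h * D).
    rewrite !SE; apply: cvgB; first apply: cvgB.
    - exact: T_cvg u _ hxh.
    - exact: T_cvg u _ hx2.
    - exact: cvgMl_tmp cvD.
  apply: (lim_bound _ _ _ cF) => N.
  have -> : \sum_(n < N) (gamma ^+ n * phi (a n)) - \sum_(n < N) (gamma ^+ n * phi (c n)) - h * Ds N
      = \sum_(n < N) (gamma ^+ n * (phi (a n) - phi (c n) - (a n - c n) * 'D_1 phi (c n))).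
    rewrite /Ds -sumrB mulr_sumr -sumrB; apply: eq_bigr => n _.
    rewrite /a /c eS_diff [RHS]mulrBr [in RHS]mulrBr mulrCA (mulrA h) //.
  have -> : K * h ^+ 2 = (M2 * h ^+ 2) / (1 - gamma) by rewrite /K mulrAC.
  apply: (geo_bound _ g0 g1 (fun n => gamma ^+ n * (phi (a n) - phi (c n) - (a n - c n) * 'D_1 phi (c n))) _ N) => n.
  rewrite normrM (ger0_norm (exprn_ge0 _ (ltW g0))) mulrC.
  apply: ler_wpM2r; first exact: exprn_ge0 (ltW g0).
  apply: le_trans (TAY _ _ (eS_in _ _ b2 g0 g1 u n _ hx2) (eS_in _ _ b2 g0 g1 u n _ hxh)) _.
  rewrite eS_diff; apply: ler_wpM2l => //.
  rewrite exprMn; apply: ler_piMr; first exact: sqr_ge0.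
  apply: exprn_ile1; first by rewrite invr_ge0 ltW // (Bn_gt0 _ b2).
  by rewrite invf_le1 ?(Bn_gt0 _ b2) ?(Bn_ge1 _ b2).
apply/cvg_ex; exists D.
apply/cvgrPdist_le => e e0.
have Kp : 0 < K + 1 by lra.
near=> h.
have hne : h != 0 by near: h; exact: nbhs_dnbhs_neq.
have h1 : `|h| <= 1 by near: h; apply: dnbhs0_le; lra.
have he : `|h| <= e / (K + 1) by near: h; apply: dnbhs0_le; rewrite divr_gt0.
have -> : ((S b gamma phi)^~ u \o shift x) h%:A = S b gamma phi (x + h) u.
  by rewrite /= /GRing.scale /= mulr1 addrC.
set A := S b gamma phi (x + h) u - S b gamma phi x u.
have -> : D - h^-1 *: A = - (h^-1 * (A - h * D)).
  by rewrite /GRing.scale /= [in RHS]mulrBr [in RHS]mulrA mulVf // mul1r opprB.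
rewrite normrN normrM normfV.
apply: (le_trans (ler_wpM2l _ (key h h1))); first by rewrite invr_ge0.
rewrite -(real_normK (num_real h)) expr2 mulrCA (mulrA (`|h|^-1)) mulVf ?normr_eq0 // mul1r.
move: he; rewrite ler_pdivlMr // => he.
have := normr_ge0 h; nra.
Unshelve. all: by end_near.
Qed.

Lemma S_shift (u : Sigma b) x : 0 <= x <= 1 ->
  S b gamma phi x u = phi ((x + (u 0%N : nat)%:R) / b%:R) +
     gamma * S b gamma phi ((x + (u 0%N : nat)%:R) / b%:R) (fun k => u k.+1).
Proof.
move=> hx.
set y := (x + (u 0%N : nat)%:R) / b%:R.
set v : Sigma b := fun k => u k.+1.
have ey : eS b u 0 x = y by rewrite /eS /cS big_ord1 expr0 mulr1 expr1.
have hy : -1 <= y <= 2.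
  have := eS_01 _ _ b2 g0 g1 u 0 _ hx; rewrite ey => /andP [? ?].
  by apply/andP; split; lra.
have hx2 : -1 <= x <= 2 by move: hx => /andP [? ?]; apply/andP; split; lra.
have bne : (b%:R : R) != 0 by rewrite pnatr_eq0 -lt0n; apply: leq_trans b2.
have key : forall n, eS b u n.+1 x = eS b v n y.
  move=> n.
  have cE : cS (R:=R) b u n.+1 = (u 0%N : nat)%:R + b%:R * cS b v n.
    rewrite /cS big_ord_recl /= expr0 mulr1 mulr_sumr; congr (_ + _).
    by apply: eq_bigr => i _; rewrite /bump /= add1n exprS mulrCA.
  rewrite /eS cE [(b%:R ^+ n.+2)]exprS invfM mulrA; congr (_ / _).
  by rewrite /y addrA mulrDl [b%:R * _]mulrC mulfK.
have E : (fun N => \sum_(n < N.+1) (gamma ^+ n * phi (eS b u n x))) =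
    (fun N => phi y + gamma * \sum_(n < N) (gamma ^+ n * phi (eS b v n y))).
  apply/funext => N; rewrite big_ord_recl /= expr0 mul1r ey mulr_sumr; congr (_ + _).
  by apply: eq_bigr => i _; rewrite /bump /= add1n key exprS mulrA.
have H1 : (fun N => \sum_(n < N.+1) (gamma ^+ n * phi (eS b u n x))) @ \oo -->
    phi y + gamma * limn (fun N => \sum_(n < N) (gamma ^+ n * phi (eS b v n y))).
  rewrite E; apply: cvgD; first exact: cvg_cst.
  exact: cvgMl_tmp (T_cvg v _ hy).
have H2 : (fun N => \sum_(n < N) (gamma ^+ n * phi (eS b u n x))) @ \oo -->
    phi y + gamma * limn (fun N => \sum_(n < N) (gamma ^+ n * phi (eS b v n y))).
  by rewrite -cvg_shiftS.
by rewrite !SE (cvg_lim _ H2).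
Qed.
End E.
Theorem lemma6p2 (R : realType) (b : nat) (gamma : R) (phi : R -> R) (alpha : R) :
  (2 <= b)%N -> 0 < gamma -> gamma < 1 ->
  real_analytic phi -> Zperiodic phi -> condH b gamma phi ->
  {ae (@lebesgue_measure R), forall x, exact_dim b gamma phi x alpha} ->
  alpha < Num.min 1 (ln (b%:R : R) / ln (gamma^-1)) ->
  exists x2 : R, exists u : Sigma b,
    0 <= x2 <= 1 /\ derivable (fun x => S b gamma phi x u) x2 1 /\
    derive1 (fun x => S b gamma phi x u) x2 != 0.
Proof.
move=> b2 g0 g1 Han Hper HH _ _.
apply: contrapT => Hn.
have Sd := S_derivable b gamma phi b2 g0 g1 Han.
have D0 : forall (u : Sigma b) x, 0 <= x <= 1 ->
    'D_1 (fun z => S b gamma phi z u) x = 0.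
  move=> u x hx; case: (eqVneq ('D_1 (fun z => S b gamma phi z u) x) 0) => // hne.
  exfalso; apply: Hn; exists x, u; split => //; split; first exact: Sd.
  by rewrite derive1E.
have CONST : forall (u : Sigma b) x, 0 <= x <= 1 ->
    S b gamma phi x u = S b gamma phi 0 u.
  move=> u x /andP [xa xb]; case: (eqVneq x 0) => [->//|xne].
  have x0 : 0 < x by rewrite lt_neqAle eq_sym xne.
  have dd : forall t, t \in `]0, x[ -> is_derive t 1 (fun z => S b gamma phi z u)
      ('D_1 (fun z => S b gamma phi z u) t).
    move=> t; rewrite in_itv /= => /andP [? ?]; apply: derivableP; apply: Sd.
    by apply/andP; split; lra.
  have cc : {within `[0, x], continuous (fun z => S b gamma phi z u)}.
    apply: derivable_within_continuous => t; rewrite in_itv /= => /andP [? ?].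
    by apply: Sd; apply/andP; split; lra.
  have [c hc E] := MVT x0 dd cc.
  apply/eqP; rewrite -subr_eq0 E D0 ?mul0r //.
  by move: hc; rewrite in_itv /= => /andP [? ?]; apply/andP; split; lra.
have bgt0 : (0 : R) < b%:R by rewrite ltr0n; apply: leq_trans b2.
have bne : (b%:R : R) != 0 by rewrite gt_eqF.
have PHI_D : forall d : 'I_b, forall y, (d : nat)%:R / b%:R <= y <= (d : nat).+1%:R / b%:R ->
    phi y = phi ((d : nat)%:R / b%:R).
  move=> d y /andP [y1 y2].
  set u : Sigma b := fun _ => d.
  have dlt : ((d : nat).+1%:R : R) <= b%:R by rewrite ler_nat; exact: ltn_ord.
  have d0 : (0 : R) <= (d : nat)%:R by [].
  have P : forall x, 0 <= x <= 1 -> phi ((x + (d : nat)%:R) / b%:R) =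
      S b gamma phi 0 u - gamma * S b gamma phi 0 (fun k => u k.+1).
    move=> x hx; have := S_shift b gamma phi b2 g0 g1 Han u x hx.
    rewrite (CONST u x hx) (CONST _ ((x + (d : nat)%:R) / b%:R)).
      by move=> E; rewrite {1}E addrK.
    move: hx => /andP [? ?]; rewrite ler_pdivlMr // ler_pdivrMr // mul0r mul1r.
    by apply/andP; split; rewrite -?natr1 in dlt *; lra.
  have hx : 0 <= y * b%:R - (d : nat)%:R <= 1.
    move: y1 y2; rewrite ler_pdivrMr // ler_pdivlMr // => y1 y2.
    by rewrite -natr1 in y2; apply/andP; split; lra.
  have := P _ hx; rewrite subrK mulfK // => ->.
  have h0 : 0 <= (0 : R) <= 1 by apply/andP; split; lra.
  by have := P _ h0; rewrite add0r => ->.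
have PHI01 : forall m, (m < b)%N -> forall y, 0 <= y <= m.+1%:R / b%:R -> phi y = phi 0.
  elim=> [|m IH] mb y /andP [y0 y1].
    have := PHI_D (Ordinal mb) y; rewrite /= mul0r => -> //.
    by apply/andP; split.
  have mb' : (m < b)%N by apply: ltnW.
  case: (lerP y (m.+1%:R / b%:R)) => hy.
    by apply: IH => //; apply/andP; split.
  have := PHI_D (Ordinal mb) y; rewrite /= => -> ; last by apply/andP; split => //; apply: ltW.
  apply: IH => //; apply/andP; split => //.
have PHI1 : forall y, 0 <= y <= 1 -> phi y = phi 0.
  move=> y hy; have bp : (b.-1 < b)%N by rewrite prednK ?leqnn // (leq_trans _ b2).
  apply: (PHI01 _ bp); rewrite prednK ?(leq_trans _ b2) // divff //.
have PER : forall z n, phi (z + n%:R) = phi z.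
  move=> z; elim=> [|n IH]; first by rewrite addr0.
  by rewrite -natr1 addrA Hper IH.
have ALL : forall y, phi y = phi 0.
  move=> y; have := floor_itv y; set f := Num.floor y => /andP [f1 f2].
  have hz : 0 <= y - f%:~R <= 1.
    rewrite intrD in f2; apply/andP; split; lra.
  case: f f1 f2 hz => n f1 f2 hz.
    have e : ((Posz n)%:~R : R) = n%:R by [].
    by rewrite -(PHI1 _ hz) e -[RHS](PER _ n) subrK.
  have e : ((Negz n)%:~R : R) = - n.+1%:R by rewrite NegzE mulrNz.
  by rewrite -(PHI1 _ hz) e opprK PER.
have b0 : (0 < b)%N by apply: leq_trans b2.
apply: (HH (fun _ => Ordinal b2) (fun _ => Ordinal b0)).
  by move=> /(congr1 (fun f : Sigma b => nat_of_ord (f 0%N))).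
move=> x.
have E : forall j : Sigma b, S b gamma phi x j = limn (fun N => \sum_(n < N) gamma ^+ n * phi 0).
  move=> j; rewrite SE; congr (lim (_ @ \oo)); apply/funext => N; apply: eq_bigr => n _.
  by rewrite ALL.
by rewrite !E subrr.
Qed.
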